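(* Let $(\mathfrak g,N)$ be a finite-dimensional Nijenhuis perm algebra, $(V,\ell,r)$ a finite-dimensional representation of $\mathfrak g$, and $S:\mathfrak g\to\mathfrak g$, $\alpha,\beta:V\to V$ linear maps. The following are equivalent: (1) $(\mathfrak g\ltimes_{\ell,r}V,N+\alpha)$ is a Nijenhuis perm algebra and the linear map $S+\beta$ on $\mathfrak g\oplus V$ is admissible to it; (2) $(\mathfrak g\ltimes_{r^*-\ell^*,r^*}V^*,N+\beta^* )$ is a Nijenhuis perm algebra and the linear map $S+\alpha^*$ on $\mathfrak g\oplus V^*$ is admissible to it; (3) (a) $(V,\ell,r,\alpha)$ is a representation of $(\mathfrak g,N)$; (b) $S$ is admissible to $(\mathfrak g,N)$; (c) $\beta$ is admissible to $(\mathfrak g,N)$ on $(V,\ell,r)$; (d) for all $x\in\mathfrak g$, $u\in V$: $$\beta(\ell(x)\alpha(u))+\ell(S^2(x))u=\ell(S(x))\alpha(u)+\beta(\ell(S(x))u),$$ $$\beta(\alpha(u)r(x))+u\,r(S^2(x))=\alpha(u)r(S(x))+\beta(u\,r(S(x))).$$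
   Context: Over a field $K$. A (right) perm algebra: bilinear product with $(xy)z=x(yz)=x(zy)$. A representation $(V,\ell,r)$: linear $\ell,r:\mathfrak g\to\mathrm{End}(V)$, left action $\ell(x)v$, right action $v\,r(x)$, with $v\,r(xy)=(v\,r(x))r(y)=(v\,r(y))r(x)$ and $\ell(xy)v=\ell(x)(\ell(y)v)=\ell(x)(v\,r(y))=(\ell(x)v)r(y)$. Nijenhuis operator $N$: $N(x)N(y)+N^2(xy)=N(N(x)y)+N(xN(y))$. A representation of $(\mathfrak g,N)$: $(V,\ell,r,\alpha)$ with $\ell(N(x))\alpha(v)+\alpha^2(\ell(x)v)=\alpha(\ell(N(x))v)+\alpha(\ell(x)\alpha(v))$ and $\alpha(v)r(N(x))+\alpha^2(v\,r(x))=\alpha(v\,r(N(x)))+\alpha(\alpha(v)r(x))$. $\mathfrak g\ltimes_{\ell,r}V$ is $\mathfrak g\oplus V$ with product $(x+u)(y+v)=xy+\ell(x)v+u\,r(y)$; $(N+\alpha)(x+u)=N(x)+\alpha(u)$, $(S+\beta)(x+u)=S(x)+\beta(u)$. Dual maps: $\langle\ell^*(x)u^*,v\rangle=\langle u^*,\ell(x)v\rangle$, $\langle u^*r^*(x),v\rangle=\langle u^*,v\,r(x)\rangle$, and $\alpha^*,\beta^*$ are the dual maps of $\alpha,\beta$; $\mathfrak g\ltimes_{r^*-\ell^*,r^*}V^*$ is $\mathfrak g\oplus V^*$ with product $(x+a)(y+b)=xy+(b\,r^*(x)-\ell^*(x)b)+a\,r^*(y)$. A linear map $S$ on a Nijenhuis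 perm algebra $(A,N)$ is admissible to $(A,N)$ if $S(N(x)y)+xS^2(y)-N(x)S(y)-S(xS(y))=0$ and $S(xN(y))+S^2(x)y-S(x)N(y)-S(S(x)y)=0$ for all $x,y\in A$. $\beta$ is admissible to $(\mathfrak g,N)$ on $(V,\ell,r)$ if for all $x\in\mathfrak g,u\in V$: $\beta(\ell(N(x))u)+\ell(x)\beta^2(u)-\ell(N(x))\beta(u)-\beta(\ell(x)\beta(u))=0$ and $\beta(u\,r(N(x)))+\beta^2(u)r(x)-\beta(u)r(N(x))-\beta(\beta(u)r(x))=0$. *)

(* Defs.v *)
From HB Require Import structures.
From mathcomp Require Import all_boot all_algebra.
Set Implicit Arguments. Unset Strict Implicit. Unset Printing Implicit Defensive.
Import GRing.Theory.
Local Open Scope ring_scope.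

Section PermDefs.
Variable K : fieldType.

Definition lin (A B : lmodType K) (f : A -> B) :=
  forall (a : K) (u v : A), f (a *: u + v) = a *: f u + f v.

Definition bilin (A : lmodType K) (mul : A -> A -> A) :=
  (forall x, lin (mul x)) /\ (forall y, lin (fun x => mul x y)).

Definition perm_algebra (A : lmodType K) (mul : A -> A -> A) :=
  bilin mul /\
  forall x y z, mul (mul x y) z = mul x (mul y z) /\ mul x (mul y z) = mul x (mul z y).

Definition nijenhuis (A : lmodType K) (mul : A -> A -> A) (N : A -> A) :=
  forall x y, mul (N x) (N y) + N (N (mul x y)) = N (mul (N x) y) + N (mul x (N y)).

Definition nijenhuis_perm_algebra (A : lmodType K) (mul : A -> A -> A) (N : A -> A) :=
  perm_algebra mul /\ lin N /\ nijenhuis mul N.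

Definition admissible (A : lmodType K) (mul : A -> A -> A) (N S : A -> A) :=
  forall x y,
    S (mul (N x) y) + mul x (S (S y)) - mul (N x) (S y) - S (mul x (S y)) = 0 /\
    S (mul x (N y)) + mul (S (S x)) y - mul (S x) (N y) - S (mul (S x) y) = 0.

(* representation (V, l, r) of the perm algebra (g, mul);
   l x v stands for l(x)v (left action), r x v stands for v r(x) (right action) *)
Definition representation (g V : lmodType K) (mul : g -> g -> g)
    (l r : g -> V -> V) :=
  [/\ (forall x, lin (l x)), (forall x, lin (r x)),
      (forall v, lin (fun x => l x v)) & (forall v, lin (fun x => r x v))] /\
  ((forall x y v, r (mul x y) v = r y (r x v) /\ r y (r x v) = r x (r y v)) /\
      (forall x y v, [/\ l (mul x y) v = l x (l y v), l x (l y v) = l x (r y v)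
                     & l x (r y v) = r y (l x v)])).

Definition nij_representation (g V : lmodType K) (N : g -> g)
    (l r : g -> V -> V) (alpha : V -> V) :=
  forall x v,
    l (N x) (alpha v) + alpha (alpha (l x v)) = alpha (l (N x) v) + alpha (l x (alpha v)) /\
    r (N x) (alpha v) + alpha (alpha (r x v)) = alpha (r (N x) v) + alpha (r x (alpha v)).

Definition admissible_rep (g V : lmodType K) (N : g -> g)
    (l r : g -> V -> V) (beta : V -> V) :=
  forall x u,
    beta (l (N x) u) + l x (beta (beta u)) - l (N x) (beta u) - beta (l x (beta u)) = 0 /\
    beta (r (N x) u) + r x (beta (beta u)) - r (N x) (beta u) - beta (r x (beta u)) = 0.

Definition sdprod_mul (g V : lmodType K) (mul : g -> g -> g)
    (l r : g -> V -> V) (p q : g * V) : g * V :=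
  (mul p.1 q.1, l p.1 q.2 + r q.1 p.2).

Definition summap (g V : lmodType K) (N : g -> g) (alpha : V -> V) (p : g * V) : g * V :=
  (N p.1, alpha p.2).

(* dual space V^* := Hom(V, K), pairing <f, v> = f v *)
Definition dualv (V : vectType K) := 'Hom(V, K^o).

(* dual map of an endomorphism: <phi^* f, v> = <f, phi v>, i.e. phi^* f = f o phi *)
Definition dualmap (V : vectType K) (phi : 'End(V)) (f : dualv V) : dualv V :=
  (f \o phi)%VF.

End PermDefs.

(* Main.v *)
Require Import Defs.
From HB Require Import structures.
From mathcomp Require Import all_boot all_algebra ring.
Import GRing.Theory.
Local Open Scope ring_scope.

Lemma linD {K : fieldType} {A B : lmodType K} {f : A -> B} :
  lin f -> forall u v, f (u + v) = f u + f v.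
Proof. by move=> H u v; have := H 1 u v; rewrite !scale1r. Qed.

Lemma lin0 {K : fieldType} {A B : lmodType K} {f : A -> B} : lin f -> f 0 = 0.
Proof.
move=> H; have := linD H 0 0; rewrite addr0 => /eqP.
by rewrite eq_sym -subr_eq0 addrK => /eqP.
Qed.

Lemma eqS (M : zmodType) (a b c d : M) : a + b - c - d = 0 <-> a + b = c + d.
Proof. by rewrite -addrA -opprD; split => [/eqP|->]; [rewrite subr_eq0 => /eqP|rewrite subrr]. Qed.

Lemma Z1 (M : zmodType) (a1 b1 c1 d1 a2 b2 c2 d2 : M) :
  a1 + b1 = c1 + d1 -> a2 + b2 = c2 + d2 ->
  (a1 + a2) + (b1 + b2) = (c1 + c2) + (d1 + d2).
Proof. by move=> H1 H2; rewrite addrACA H1 H2 [RHS]addrACA. Qed.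

Lemma Z2 (M : zmodType) (a1 b1 c1 d1 a2 b2 c2 d2 : M) :
  a1 + b1 - c1 - d1 = 0 -> a2 + b2 - c2 - d2 = 0 ->
  (a1 + a2) + (b1 + b2) - (c1 + c2) - (d1 + d2) = 0.
Proof. by move=> /eqS H1 /eqS H2; apply/eqS/Z1. Qed.

Lemma pairZ (K : fieldType) (A B : lmodType K) (a : K) (x : A) (y : B) :
  a *: (x, y) = (a *: x, a *: y).
Proof. by []. Qed.

Lemma pairD (K : fieldType) (A B : lmodType K) (a c : A) (b d : B) :
  (a, b) + (c, d) = (a + c, b + d).
Proof. by []. Qed.

Section Gen.
Variables (K : fieldType) (g W : lmodType K) (mul : g -> g -> g) (N S : g -> g)
  (l r : g -> W -> W) (al be : W -> W).
Hypotheses (Hl : forall x, lin (l x)) (Hr : forall x, lin (r x))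
  (Hal : lin al) (Hbe : lin be).

Let lz x : l x 0 = 0. Proof. exact: lin0. Qed.
Let rz x : r x 0 = 0. Proof. exact: lin0. Qed.
Let az : al 0 = 0. Proof. exact: lin0. Qed.
Let bz : be 0 = 0. Proof. exact: lin0. Qed.
Let lD x := linD (Hl x).
Let rD x := linD (Hr x).
Let aD := linD Hal.
Let bD := linD Hbe.

Lemma nij_iff : nijenhuis mul N ->
  nijenhuis (sdprod_mul mul l r) (summap N al) <-> nij_representation N l r al.
Proof.
move=> HN; split.
- move=> H x v; split.
  + have := congr1 snd (H (x, 0) (0, v)).
    by rewrite /sdprod_mul /summap /= ?az ?bz ?lz ?rz ?add0r ?addr0.
  + have := congr1 snd (H (0, v) (x, 0)).
    by rewrite /sdprod_mul /summap /= ?az ?bz ?lz ?rz ?add0r ?addr0 [in RHS]addrC.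
- move=> H [x u] [y v]; rewrite /sdprod_mul /summap /=.
  congr pair; first exact: HN.
  rewrite !aD; apply: Z1; first by case: (H x v).
  by case: (H y u) => _ ->; rewrite addrC.
Qed.

Lemma adm_iff :
  admissible (sdprod_mul mul l r) (summap N al) (summap S be) <->
  [/\ admissible mul N S, admissible_rep N l r be &
      forall x u,
        be (l x (al u)) + l (S (S x)) u = l (S x) (al u) + be (l (S x) u) /\
        be (r x (al u)) + r (S (S x)) u = r (S x) (al u) + be (r (S x) u)].
Proof.
rewrite /sdprod_mul /summap; split.
- move=> H; split.
  + move=> x y; have [H1 H2] := H (x, 0) (y, 0).
    by split; [move: (congr1 fst H1) | move: (congr1 fst H2)].
  + move=> x u; have [H1 _] := H (x, 0) (0, u); have [_ H2] := H (0, u) (x, 0).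
    move: (congr1 snd H1) (congr1 snd H2) => /=.
    by rewrite ?az ?bz ?lz ?rz ?add0r ?addr0 ?subr0 ?sub0r.
  + move=> x u; have [_ H1] := H (x, 0) (0, u); have [H2 _] := H (0, u) (x, 0).
    move: (congr1 snd H1) (congr1 snd H2) => /=.
    by rewrite ?az ?bz ?lz ?rz ?add0r ?addr0 ?subr0 ?sub0r => /eqS -> /eqS ->.
- move=> [HS Hb Hd] [x u] [y v] /=; split.
  + congr pair; first by case: (HS x y).
    rewrite !bD; apply: Z2; first by case: (Hb x v).
    by case: (Hd y u) => _ /eqS.
  + congr pair; first by case: (HS x y).
    rewrite !bD; apply: Z2; first by case: (Hd x v) => /eqS.
    by case: (Hb y u).
Qed.

Lemma perm_iff : perm_algebra mul -> representation mul l r ->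
  perm_algebra (sdprod_mul mul l r).
Proof.
move=> [[Hm1 Hm2] Hm] [[Hl' Hr' Hlx Hrx] [Hrr Hll]]; split.
- split.
  + move=> [x u] a [y v] [z w]; rewrite /sdprod_mul /=; congr pair; first exact: Hm1.
    by rewrite pairZ /= (Hl x) (Hrx u) scalerDr addrACA.
  + move=> [y v] a [x u] [z w]; rewrite /sdprod_mul /=; congr pair; first exact: (Hm2 y).
    by rewrite pairZ /= (Hlx v) (Hr y) scalerDr addrACA.
- move=> [x u] [y v] [z w]; rewrite /sdprod_mul /=; split; congr pair; try by case: (Hm x y z).
  + have [H1 _ _] := Hll x y w; have [_ _ H3] := Hll x z v; have [H4 _] := Hrr y z u.
    by rewrite rD lD H1 -H3 H4 addrA.
  + have [_ H1 _] := Hll x y w; have [_ H2 _] := Hll x z v.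
    have [H4 H5] := Hrr y z u; have [H6 _] := Hrr z y u.
    by rewrite !lD H1 -H2 H4 H5 H6 [l x (r y w) + _]addrC.
Qed.
End Gen.

Lemma sep (K : fieldType) (V : vectType K) (w : V) :
  (forall f : 'Hom(V, K^o), f w = 0) -> w = 0.
Proof.
move=> H; rewrite (coord_vbasis (memvf w)); apply: big1 => i _.
have := H (linfun (coord (vbasis fullv) i : V -> K^o)).
by rewrite lfunE /= => ->; rewrite scale0r.
Qed.

Definition lfE := (add_lfunE, scale_lfunE, comp_lfunE, opp_lfunE, zero_lfunE).

Section Dual.
Variables (K : fieldType) (g : lmodType K) (V : vectType K) (mul : g -> g -> g)
  (l r : g -> 'End(V)).

Definition ldual x (f : dualv V) := dualmap (r x) f - dualmap (l x) f.
Definition rdual x (f : dualv V) := dualmap (r x) f.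

Lemma dual_lin (phi : 'End(V)) : lin (dualmap phi).
Proof. by move=> a f h; apply/lfunP => v; rewrite /dualmap !lfE. Qed.

Lemma rep_dual : representation mul (fun x => l x) (fun x => r x) ->
  representation mul ldual rdual.
Proof.
move=> [[_ _ Hlx Hrx] [Hrr Hll]]; split; [split|split].
- move=> x a f h; apply/lfunP => v; rewrite /ldual /dualmap !lfE /=; ring.
- move=> x a f h; apply/lfunP => v; rewrite /rdual /dualmap !lfE /=; ring.
- move=> f a x y; apply/lfunP => v; rewrite /ldual /dualmap !lfE /=.
  rewrite (Hlx v) (Hrx v) !linearP /=; ring.
- move=> f a x y; apply/lfunP => v; rewrite /rdual /dualmap !lfE /=.
  by rewrite (Hrx v) !linearP.
- move=> x y f; split; apply/lfunP => v; rewrite /rdual /dualmap !lfE /=.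
  + by rewrite (Hrr x y v).1 (Hrr x y v).2.
  + by rewrite (Hrr x y v).2.
- move=> x y f; split; apply/lfunP => v; rewrite /ldual /rdual /dualmap !lfE /=;
  have [L1 L2 L3] := Hll x y v; have [_ L4 _] := Hll y x v; have [R1 R2] := Hrr x y v;
  rewrite ?R1 ?L1 ?L2 -?L4 -?L3 -?R2; ring.
Qed.

Lemma fa2 (A B : Type) (P Q : A -> B -> Prop) :
  (forall x y, P x y /\ Q x y) <-> (forall x y, P x y) /\ (forall x y, Q x y).
Proof. split=> [H|[H1 H2] x y]; [split=> x y; case: (H x y)|split]; auto. Qed.

Lemma dual_pair (A1 B1 A2 B2 : g -> dualv V -> dualv V) (Wa Wb : g -> V -> V)
    (Pa Pb : g -> V -> Prop) :
  (forall x f v, (A1 x f - B1 x f) v = f (Wa x v - Wb x v)) ->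
  (forall x f v, (A2 x f - B2 x f) v = f (Wa x v)) ->
  (forall x v, Wa x v = 0 <-> Pa x v) ->
  (forall x v, Wb x v = 0 <-> Pb x v) ->
  ((forall x f, A1 x f = B1 x f /\ A2 x f = B2 x f) <->
   (forall x v, Pb x v /\ Pa x v)).
Proof.
move=> E1 E2 Ha Hb; split.
- move=> H x v.
  have Za : Wa x v = 0.
    apply: sep => f; rewrite -E2 (H x f).2 subrr; exact: zero_lfunE.
  have Zb : Wa x v - Wb x v = 0.
    apply: sep => f; rewrite -E1 (H x f).1 subrr; exact: zero_lfunE.
  move: Zb; rewrite Za sub0r => /eqP; rewrite oppr_eq0 => /eqP Zb.
  by split; [apply/Hb|apply/Ha].
- move=> H x f; split; apply/eqP; rewrite -subr_eq0; apply/eqP/lfunP => v;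
  have [/Hb Zb /Ha Za] := H x v;
  by rewrite ?E1 ?E2 Za ?Zb ?subrr linear0 zero_lfunE.
Qed.

Lemma D1 (N : g -> g) (be : 'End(V)) :
  nij_representation N ldual rdual (dualmap be) <->
  admissible_rep N (fun x => l x) (fun x => r x) be.
Proof.
rewrite /nij_representation /admissible_rep.
apply: (dual_pair _ _ _ _
  (fun x v => be (r (N x) v) + r x (be (be v)) - r (N x) (be v) - be (r x (be v)))
  (fun x v => be (l (N x) v) + l x (be (be v)) - l (N x) (be v) - be (l x (be v)))).
- move=> x f v; rewrite /ldual /dualmap !lfE /= !linearB !linearD /=; ring.
- move=> x f v; rewrite /rdual /dualmap !lfE /= !linearB !linearD /=; ring.
- by [].
- by [].
Qed.

Lemma D2 (N : g -> g) (al : 'End(V)) :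
  admissible_rep N ldual rdual (dualmap al) <->
  nij_representation N (fun x => l x) (fun x => r x) al.
Proof.
rewrite /nij_representation /admissible_rep.
apply: (dual_pair _ _ _ _
  (fun x v => r (N x) (al v) + al (al (r x v)) - al (r (N x) v) - al (r x (al v)))
  (fun x v => l (N x) (al v) + al (al (l x v)) - al (l (N x) v) - al (l x (al v)))).
- move=> x f v; rewrite subr0 /ldual /dualmap !lfE /= !linearB !linearD /=; ring.
- move=> x f v; rewrite subr0 /rdual /dualmap !lfE /= !linearB !linearD /=; ring.
- move=> x v; exact: eqS.
- move=> x v; exact: eqS.
Qed.

Lemma D3 (S : g -> g) (al be : 'End(V)) :
  (forall x u,
    dualmap al (ldual x (dualmap be u)) + ldual (S (S x)) u
      = ldual (S x) (dualmap be u) + dualmap al (ldual (S x) u) /\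
    dualmap al (rdual x (dualmap be u)) + rdual (S (S x)) u
      = rdual (S x) (dualmap be u) + dualmap al (rdual (S x) u)) <->
  (forall x u,
    be (l x (al u)) + l (S (S x)) u = l (S x) (al u) + be (l (S x) u) /\
    be (r x (al u)) + r (S (S x)) u = r (S x) (al u) + be (r (S x) u)).
Proof.
apply: (dual_pair _ _ _ _
  (fun x v => be (r x (al v)) + r (S (S x)) v - r (S x) (al v) - be (r (S x) v))
  (fun x v => be (l x (al v)) + l (S (S x)) v - l (S x) (al v) - be (l (S x) v))).
- move=> x f v; rewrite /ldual /dualmap !lfE /= !linearB !linearD /=; ring.
- move=> x f v; rewrite /rdual /dualmap !lfE /= !linearB !linearD /=; ring.
- move=> x v; exact: eqS.
- move=> x v; exact: eqS.
Qed.
End Dual.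

Lemma lin_summap (K : fieldType) (g W : lmodType K) (N : g -> g) (al : W -> W) :
  lin N -> lin al -> lin (summap N al).
Proof.
move=> HN Hal a [x u] [y v]; rewrite /summap pairZ pairD /=.
by rewrite HN Hal pairZ pairD.
Qed.

Theorem theorem2p40 (K : fieldType) (g V : vectType K)
    (mul : g -> g -> g) (N : 'End(g))
    (l r : g -> 'End(V))
    (S : 'End(g)) (alpha beta : 'End(V)) :
  nijenhuis_perm_algebra mul N ->
  representation mul (fun x => l x) (fun x => r x) ->
  let P1 :=
    nijenhuis_perm_algebra (sdprod_mul mul (fun x => l x) (fun x => r x)) (summap N alpha)
    /\ admissible (sdprod_mul mul (fun x => l x) (fun x => r x))
                  (summap N alpha) (summap S beta) in
  (* dual: left action r^* - l^*, right action r^*, with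
     l^*(x) f = dualmap (l x) f and  f r^*(x) = dualmap (r x) f *)
  let ld := fun x (f : dualv V) => dualmap (r x) f - dualmap (l x) f in
  let rd := fun x (f : dualv V) => dualmap (r x) f in
  let P2 :=
    nijenhuis_perm_algebra (sdprod_mul mul ld rd) (summap N (dualmap beta))
    /\ admissible (sdprod_mul mul ld rd) (summap N (dualmap beta))
                  (summap S (dualmap alpha)) in
  let P3 :=
    [/\ nij_representation N (fun x => l x) (fun x => r x) alpha,
        admissible mul N S,
        admissible_rep N (fun x => l x) (fun x => r x) beta &
        forall x u,
          beta (l x (alpha u)) + l (S (S x)) u = l (S x) (alpha u) + beta (l (S x) u) /\
          beta (r x (alpha u)) + r (S (S x)) u = r (S x) (alpha u) + beta (r (S x) u)] in
  (P1 <-> P3) /\ (P2 <-> P3).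

Proof.
move=> HA HR P1 ld rd P2 P3.
have [Hperm [HNl HNn]] := HA.
have Hl : forall x, lin (fun v => l x v) by move=> x a u v; exact: linearP.
have Hr : forall x, lin (fun v => r x v) by move=> x a u v; exact: linearP.
have Hal : lin (fun v => alpha v) by move=> a u v; exact: linearP.
have Hbe : lin (fun v => beta v) by move=> a u v; exact: linearP.
have HRd := rep_dual _ _ _ _ _ _ HR.
have [[Hld Hrd _ _] _] := HRd.
have Hbd : lin (dualmap beta) by exact: dual_lin.
have Had : lin (dualmap alpha) by exact: dual_lin.
split.
- rewrite /P1 /P3; split.
  + case=> [[_ [_ Hn]] Hadm].
    have := (nij_iff _ _ _ _ _ _ _ _ Hl Hr Hal HNn).1 Hn.
    case/(adm_iff _ _ _ _ _ _ _ _ _ _ Hl Hr Hal Hbe): Hadm => HS Hb Hd Hn'.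
    by split.
  + case=> Hn HS Hb Hd; split.
    * split; first exact: (perm_iff _ _ _ _ _ _ Hl Hr Hperm HR).
      split; first exact: lin_summap.
      exact/(nij_iff _ _ _ _ _ _ _ _ Hl Hr Hal HNn).
    * exact/(adm_iff _ _ _ _ _ _ _ _ _ _ Hl Hr Hal Hbe).
- rewrite /P2 /P3; split.
  + case=> [[_ [_ Hn]] Hadm].
    have /D1 Hb := (nij_iff _ _ _ _ _ _ _ _ Hld Hrd Hbd HNn).1 Hn.
    case/(adm_iff _ _ _ _ _ _ _ _ _ _ Hld Hrd Hbd Had): Hadm => HS /D2 Hn' /D3 Hd.
    by split.
  + case=> Hn HS Hb Hd; split.
    * split; first exact: (perm_iff _ _ _ _ _ _ Hld Hrd Hperm HRd).
      split; first exact: lin_summap.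
      apply/(nij_iff _ _ _ _ _ _ _ _ Hld Hrd Hbd HNn); exact/D1.
    * apply/(adm_iff _ _ _ _ _ _ _ _ _ _ Hld Hrd Hbd Had); split => //; [exact/D2 | exact/D3].
Qed.
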